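(* Let $\Omega$ be a domain partitioned as $\Omega=\bigcup_{k=1}^K\Omega_k$, let $X$, $Y$, $Z$ be spaces as described in the context, with linear operators $A: X\to Y$ and $B:X\to Z$, data $f\in Y$, $g\in Z$, and a weight $\tau\ge 0$. Suppose the boundary value problem $Au=f$ in $\Omega$, $Bu=g$ on $\partial\Omega$ has a solution $u^*$ with an approximating sequence $\{u_n^*\}_{n\ge1}\subset X$ (in the sense of the context). For each $k=1,\dots,K$ let $G_k$ be a compact subset of $Y|_{\Omega_k}$ containing $\{(Au_n^*-f)|_{\Omega_k}\}_{n\ge 1}$, and set $$\tilde V_K=\{v\in X:\ (Av-f)|_{\Omega_k}\in G_k\ \text{for all } k=1,\dots,K\}.$$ Then for every $\epsilon>0$ there exist integers $N_{\epsilon,1},\dots,N_{\epsilon,K}$ such that, with $\mathbf N_{\epsilon,K}=(N_{\epsilon,1},\dots,N_{\epsilon,K})$, $$\mathcal J_\tau^{h,\mathbf N_{\epsilon,K}}(v)\ \ge\ \mathcal J_\tau(v)-\epsilon\qquad\text{for all } v\in\tilde V_K .$$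
   Context: Setting: $X$ is a space of functions on $\Omega$; $Y$ is a Hilbert space of functions on $\Omega$ and, for each subdomain $\Omega_k$, $Y|_{\Omega_k}$ denotes the Hilbert space with the same structure as $Y$ but over $\Omega_k$, such that $\|w\|_Y^2=\sum_{k=1}^K\|w|_{\Omega_k}\|_{Y|_{\Omega_k}}^2$ (e.g. $Y=L^2(\Omega)$, $Y|_{\Omega_k}=L^2(\Omega_k)$); $Z$ is a normed space of functions on $\partial\Omega$. For each $k$, $\{\Phi_{k,i}\}_{i\ge1}$ is a complete orthonormal basis of $Y|_{\Omega_k}$, and $(w,\Phi_{k,i})_Y$ denotes the inner product in $Y|_{\Omega_k}$ of $w|_{\Omega_k}$ with $\Phi_{k,i}$. The loss functionals are $$\mathcal J_\tau(v)=\|f-Av\|_Y^2+\tau\|Bv-g\|_Z^2,\qquad \mathcal J_\tau^{h,\mathbf N}(v)=\sum_{k=1}^K\sum_{i=1}^{N_k}(f-Av,\Phi_{k,i})_Y^2+\tau\|Bv-g\|_Z^2,$$ for $\mathbf N=(N_1,\dots,N_K)$. Solution concept: $u^*$ (in a space $V$) is a solution of $Au=f$, $Bu=g$ if there is a sequence $\{u_n^*\}\subset X$ with $\|u_n^*-u^*\|_V\to0$ and $\|Au_n^*-f\|_Y+\|Bu_n^*-g\|_Z\to 0$; such a sequence is called an approximating sequence of $u^*$. *)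

(* Defs.v *)
From HB Require Import structures.
From mathcomp Require Import all_boot all_order all_algebra.
From mathcomp Require Import all_classical all_reals all_analysis.
Set Implicit Arguments. Unset Strict Implicit. Unset Printing Implicit Defensive.
Import Order.TTheory GRing.Theory Num.Theory.
Import numFieldNormedType.Exports.
Local Open Scope classical_set_scope.
Local Open Scope ring_scope.

Definition is_inner_product (R : realType) (V : normedModType R)
  (ip : V -> V -> R) : Prop :=
  (forall x y, ip x y = ip y x) /\
  (forall (a : R) (x y z : V), ip (a *: x + y) z = a * ip x z + ip y z) /\
  (forall x, ip x x = `|x| ^+ 2).

Definition is_hilbert (R : realType) (V : completeNormedModType R)
  (ip : V -> V -> R) : Prop := is_inner_product ip.

Definition complete_orthonormal_basis (R : realType) (V : normedModType R)
  (ip : V -> V -> R) (Phi : nat -> V) : Prop :=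
  (forall i j, ip (Phi i) (Phi j) = if i == j then 1 else 0) /\
  (forall x, (forall i, ip x (Phi i) = 0) -> x = 0).

Definition J_tau (R : realType) (X : lmodType R) (Y Z : normedModType R)
  (A : X -> Y) (B : X -> Z) (f : Y) (g : Z) (tau : R) (v : X) : R :=
  `|f - A v| ^+ 2 + tau * `|B v - g| ^+ 2.

(* The truncated loss
   J_tau^{h,N}(v) = sum_k sum_{i < N_k} (f - A v, Phi_{k,i})_Y^2 + tau ||B v - g||_Z^2,
   where (w, Phi_{k,i})_Y = ip_k (w|_{Omega_k}) (Phi_{k,i}). *)
Definition J_tau_hN (R : realType) (X : lmodType R) (Y Z : normedModType R)
  (K : nat) (Yk : 'I_K -> normedModType R) (res : forall k, Y -> Yk k)
  (ip : forall k, Yk k -> Yk k -> R) (Phi : forall k, nat -> Yk k)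
  (A : X -> Y) (B : X -> Z) (f : Y) (g : Z) (tau : R)
  (N : 'I_K -> nat) (v : X) : R :=
  \sum_(k < K) \sum_(i < N k) (ip k (res k (f - A v)) (Phi k i)) ^+ 2
  + tau * `|B v - g| ^+ 2.

(* Main.v *)
Require Import Defs.
From HB Require Import structures.
From mathcomp Require Import all_boot all_order all_algebra.
From mathcomp Require Import all_classical all_reals all_analysis.
From mathcomp Require Import lra ring.
Import Order.TTheory GRing.Theory Num.Theory.
Import numFieldNormedType.Exports.
Local Open Scope classical_set_scope.
Local Open Scope ring_scope.

Section Hilb.
Context (R : realType) (H : completeNormedModType R) (ip : H -> H -> R)
  (Phi : nat -> H) (hH : is_inner_product ip)
  (hB : complete_orthonormal_basis ip Phi).

Let ipC x y : ip x y = ip y x. Proof. by case: hH. Qed.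
Let ipL a x y z : ip (a *: x + y) z = a * ip x z + ip y z.
Proof. by case: hH => _ []. Qed.
Let ipn x : ip x x = `|x| ^+ 2. Proof. by case: hH => _ []. Qed.
Let ipON i j : ip (Phi i) (Phi j) = if i == j then 1 else 0.
Proof. by case: hB. Qed.

Lemma ip0l z : ip 0 z = 0.
Proof. have h := ipL 1 0 0 z; rewrite scaler0 addr0 mul1r in h.
by apply: (addrI (ip 0 z)); rewrite addr0 -h. Qed.
Lemma ipDl x y z : ip (x + y) z = ip x z + ip y z.
Proof. by rewrite -[x]scale1r ipL mul1r scale1r. Qed.
Lemma ipZl a x z : ip (a *: x) z = a * ip x z.
Proof. by rewrite -[a *: x]addr0 ipL ip0l addr0. Qed.
Lemma ipNl x z : ip (- x) z = - ip x z.
Proof. by rewrite -scaleN1r ipZl mulN1r. Qed.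
Lemma ipBl x y z : ip (x - y) z = ip x z - ip y z.
Proof. by rewrite ipDl ipNl. Qed.
Lemma ip_suml N (F : 'I_N -> H) z : ip (\sum_(i < N) F i) z = \sum_(i < N) ip (F i) z.
Proof.
elim: N F => [|N IH] F; first by rewrite !big_ord0 ip0l.
by rewrite !big_ord_recr /= ipDl IH.
Qed.

Definition cf w i := ip w (Phi i).
Definition PP N w := \sum_(i < N) cf w i *: Phi i.
Definition QQ N w := w - PP N w.
Definition ss N w := \sum_(i < N) cf w i ^+ 2.

Lemma cf_PP N w j : cf (PP N w) j = if (j < N)%N then cf w j else 0.
Proof.
rewrite /cf /PP ip_suml.
under eq_bigr do rewrite ipZl ipON.
case: ifP => hj.
  rewrite (bigD1 (Ordinal hj)) //= eqxx mulr1 big1 ?addr0 //.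
  move=> i /eqP hi; case: eqP => [hij|]; last by rewrite mulr0.
  by exfalso; apply: hi; apply: val_inj.
rewrite big1 // => i _; case: eqP => [hij|]; last by rewrite mulr0.
by exfalso; move: (ltn_ord i); rewrite hij hj.
Qed.

Lemma cf_QQ N w j : (j < N)%N -> cf (QQ N w) j = 0.
Proof. by move=> hj; rewrite /QQ /cf ipBl -/(cf _ _) -/(cf _ _) cf_PP hj subrr. Qed.

Lemma ip_PPr x N w : ip x (PP N w) = \sum_(i < N) cf w i * cf x i.
Proof.
by rewrite ipC /PP ip_suml; apply: eq_bigr => i _; rewrite ipZl ipC.
Qed.

Lemma norm_PP N w : `|PP N w| ^+ 2 = ss N w.
Proof.
rewrite -ipn ip_PPr /ss; apply: eq_bigr => i _.
by rewrite cf_PP ltn_ord expr2.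
Qed.

Lemma norm_QQ N w : `|QQ N w| ^+ 2 = `|w| ^+ 2 - ss N w.
Proof.
have e1 : ip (QQ N w) (PP N w) = 0.
  by rewrite ip_PPr big1 // => i _; rewrite cf_QQ ?mulr0.
have : w = QQ N w + PP N w by rewrite /QQ subrK.
move=> ew; have h : ip w w = ip (QQ N w + PP N w) (QQ N w + PP N w) by rewrite -ew.
rewrite -norm_PP -!ipn h; move: (QQ N w) (PP N w) e1 => q p e1.
rewrite ipDl (ipC q) (ipC p) !ipDl (ipC p q) e1; lra.
Qed.

Lemma sq_lt (a b : R) : 0 <= a -> 0 <= b -> a ^+ 2 < b ^+ 2 -> a < b.
Proof. by move=> ha hb; rewrite (ltr_pXn2r (_ : 0 < 2)%N) ?nnegrE. Qed.
Lemma sq_le (a b : R) : 0 <= a -> 0 <= b -> a ^+ 2 <= b ^+ 2 -> a <= b.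
Proof. by move=> ha hb; rewrite (ler_pXn2r (_ : 0 < 2)%N) ?nnegrE. Qed.

Lemma ss_ge0 N w : 0 <= ss N w.
Proof. by apply: sumr_ge0 => i _; rewrite sqr_ge0. Qed.
Lemma ss_le N w : ss N w <= `|w| ^+ 2.
Proof. by have := sqr_ge0 `|QQ N w|; rewrite norm_QQ subr_ge0. Qed.
Lemma ssS N w : ss N.+1 w = ss N w + cf w N ^+ 2.
Proof. by rewrite /ss big_ord_recr. Qed.
Lemma ss_mono N M w : (N <= M)%N -> ss N w <= ss M w.
Proof.
move=> /subnKC <-; elim: (M - N)%N => [|k IH]; first by rewrite addn0.
by rewrite addnS ssS (le_trans IH) // lerDl sqr_ge0.
Qed.
Lemma cf_le x j : `|cf x j| <= `|x|.
Proof.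
apply: sq_le => //; rewrite real_normK ?num_real //.
by apply: le_trans (ss_le j.+1 x); rewrite ssS lerDr ss_ge0.
Qed.
Lemma cfB x y j : cf (x - y) j = cf x j - cf y j.
Proof. exact: ipBl. Qed.
Lemma cfN x j : cf (- x) j = - cf x j.
Proof. exact: ipNl. Qed.
Lemma ssN N x : ss N (- x) = ss N x.
Proof. by apply: eq_bigr => i _; rewrite cfN sqrrN. Qed.
Lemma QQB N x y : QQ N (x - y) = QQ N x - QQ N y.
Proof.
rewrite /QQ /PP.
under eq_bigr do rewrite cfB scalerBl.
rewrite sumrB; move: (\sum_(i < N) _) (\sum_(i < N) _) => a b.
by rewrite !opprB addrACA [RHS]addrACA (addrC (- y)).
Qed.

Lemma QQ_le N x : `|QQ N x| <= `|x|.
Proof. apply: sq_le => //; rewrite norm_QQ; have := ss_ge0 N x; lra. Qed.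
Lemma PP_PP N M w : (N <= M)%N -> PP N (PP M w) = PP N w.
Proof.
move=> hNM; apply: eq_bigr => i _; rewrite cf_PP.
by rewrite (leq_trans (ltn_ord i) hNM).
Qed.
Lemma PP_diff N M w : (N <= M)%N -> `|PP M w - PP N w| ^+ 2 = ss M w - ss N w.
Proof.
move=> hNM; have -> : PP M w - PP N w = QQ N (PP M w) by rewrite /QQ PP_PP.
rewrite norm_QQ norm_PP; congr (_ - _); apply: eq_bigr => i _.
by rewrite cf_PP (leq_trans (ltn_ord i) hNM).
Qed.

Lemma PP_cvg w : cvgn (fun N => PP N w).
Proof.
suff : cauchy ((fun N => PP N w) @ \oo) by exact: cauchy_cvg.
suff : cauchy_ex ((fun N => PP N w) @ \oo) by exact: cauchy_exP.
move=> d d0.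
pose S := range (fun N => ss N w).
have hS : has_sup S.
  split; first by exists (ss 0 w), 0%N.
  by exists (`|w| ^+ 2) => _ [N _ <-]; exact: ss_le.
have d20 : 0 < d ^+ 2 by rewrite exprn_gt0.
have [_ [N0 _ <-] hN0] := sup_adherent d20 hS.
exists (PP N0 w); exists N0 => // M /= hM.
rewrite -ball_normE /ball_ /= distrC; apply: sq_lt => //; first exact: ltW.
rewrite PP_diff //.
have : ss M w <= sup S by apply: sup_upper_bound => //; exists M.
lra.
Qed.

Lemma QQ_cvg w e : 0 < e -> \forall N \near \oo, `|QQ N w| < e.
Proof.
have cv := PP_cvg w; set y := limn (fun N => PP N w) in cv.
suff wy : w = y.
  by move=> e0; have := (cvgrPdist_lt _ _).1 cv e e0; rewrite -wy; apply; exact: eventually_filter.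
apply/eqP; rewrite -subr_eq0; apply/eqP; case: hB => _; apply => j.
apply/eqP; rewrite -normr_le0; apply/ler_addgt0Pr => d d0; rewrite add0r.
have hd := (cvgrPdistC_lt _ _).1 cv d d0.
near \oo => N.
have -> : w - y = QQ N w + (PP N w - y) by rewrite /QQ addrA subrK.
rewrite ipDl -/(cf _ _) -/(cf _ _) cf_QQ; last by near: N; exact: nbhs_infty_gt.
rewrite add0r (le_trans (cf_le _ _)) // ltW //; near: N; exact: hd.
Unshelve. all: by end_near.
Qed.

Lemma QQ_unif (G : set H) : compact G -> forall e, 0 < e ->
  exists N, forall w, G w -> `|w| ^+ 2 - ss N w <= e.
Proof.
move=> cG e e0.
pose d := Num.min 1 e.
have d0 : 0 < d by rewrite lt_min e0 ltr01.
have d1 : d <= 1 by rewrite ge_min lexx.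
have de : d <= e by rewrite ge_min lexx orbT.
have d20 : 0 < d / 2 by rewrite divr_gt0.
have := (compact_near_coveringP G).1 cG nat \oo (fun N x => `|QQ N x| < d).
case.
- move=> x Gx.
  exists (ball x (d / 2), [set i | `|QQ i x| < d / 2]) => /=.
    by split; [exact: nbhsx_ballx | exact: QQ_cvg].
  move=> [x' i] [/= bx hi].
  have -> : QQ i x' = QQ i (x' - x) + QQ i x by rewrite QQB subrK.
  rewrite (le_lt_trans (ler_normD _ _)) //.
  rewrite -ball_normE /ball_ /= distrC in bx.
  have := QQ_le i (x' - x); lra.
move=> N0 _ hN0; exists N0 => w Gw.
have := hN0 N0 (leqnn N0) w Gw; rewrite /= -norm_QQ => hq.
have := normr_ge0 (QQ N0 w); nra.
Qed.
End Hilb.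

Theorem mainTheorem1 (R : realType)
  (X : lmodType R) (Y Z V : normedModType R)
  (K : nat) (Yk : 'I_K -> completeNormedModType R)
  (res : forall k, {linear Y -> Yk k})
  (ip : forall k, Yk k -> Yk k -> R)
  (Phi : forall k, nat -> Yk k)
  (hHilb : forall k, is_hilbert (ip k))
  (hBasis : forall k, complete_orthonormal_basis (ip k) (Phi k))
  (hYnorm : forall w : Y, `|w| ^+ 2 = \sum_(k < K) `|res k w| ^+ 2)
  (A : {linear X -> Y}) (B : {linear X -> Z})
  (f : Y) (g : Z) (tau : R) (htau : 0 <= tau)
  (iota : X -> V) (ustar : V) (u : nat -> X)
  (hconvV : (fun n => `|iota (u n) - ustar|) @ \oo --> (0 : R))
  (hres : (fun n => `|A (u n) - f| + `|B (u n) - g|) @ \oo --> (0 : R))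
  (G : forall k, set (Yk k))
  (hGc : forall k, compact (G k))
  (hGu : forall k n, G k (res k (A (u n) - f))) :
  forall eps : R, 0 < eps ->
  exists N : 'I_K -> nat,
    forall v : X, (forall k, G k (res k (A v - f))) ->
      J_tau_hN res ip Phi A B f g tau N v >= J_tau A B f g tau v - eps.

Proof.

move=> eps eps0.
have eK0 : 0 < eps / K.+1%:R by rewrite divr_gt0 // ltr0n.
have hK : forall k : 'I_K, exists N, forall w, G k w ->
    `|w| ^+ 2 - @ss _ _ (ip k) (Phi k) N w <= eps / K.+1%:R.
  move=> k; exact: (@QQ_unif _ _ _ _ (hHilb k) (hBasis k) _ (hGc k) _ eK0).
have [N hN] := choice hK.
exists N => v hv.
rewrite /J_tau_hN /J_tau hYnorm.
have hb : \sum_(k < K) `|res k (f - A v)| ^+ 2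
   - \sum_(k < K) \sum_(i < N k) ip k (res k (f - A v)) (Phi k i) ^+ 2
   <= eps / K.+1%:R *+ K.
  rewrite -sumrB -[K in _ *+ K]card_ord -sumr_const; apply: ler_sum => k _.
  have := hN k _ (hv k).
  have e : f - A v = - (A v - f) by rewrite opprB.
  move=> h; rewrite e raddfN normrN; rewrite -(@ssN _ _ _ _ (hHilb k)) in h.
  exact: h.
have hK1 : eps / K.+1%:R *+ K <= eps.
  rewrite -mulr_natr -[leRHS](@divfK _ K.+1%:R) ?pnatr_eq0 //.
  by rewrite ler_wpM2l ?ler_nat // ltW.
move: hb hK1; move: (\sum_(k < K) `|res k (f - A v)| ^+ 2) (\sum_(k < K) \sum_(i < N k) _) (eps / _ *+ K) => a b c. lra.
Qed.
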